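(* Let $L$ be a consistent pretransitive logic and $k\le\omega$. Then the $k$-canonical frame of $L$ is $1$-heavy: for every point $x$ of depth greater than $1$ there is $y$ with $xR^*y$ and the depth of $y$ equal to $1$.
   Context: Logics are normal $n$-modal logics; a $k$-formula uses only $p_j$, $j<k$. $L$ is pretransitive if $L\vdash\Diamond^{m+1}p\to\Diamond^{\le m}p$ for some $m$, where $\Diamond^0\varphi=\varphi$, $\Diamond^{i+1}\varphi=\Diamond^i(\bigvee_{j<n}\Diamond_j\varphi)$, $\Diamond^{\le m}\varphi=\bigvee_{i\le m}\Diamond^i\varphi$. The $k$-canonical frame has points the maximal $L$-consistent sets of $k$-formulas, $xR_iy$ iff $\Diamond_i\psi\in x$ for all $k$-formulas $\psi\in y$. $R=\bigcup_iR_i$ and $R^*$ is its reflexive transitive closure. Clusters are classes of $R^*\cap(R^* )^{-1}$; the skeleton is the poset of clusters with $C\le D$ iff $xR^*y$ for some $x\in C,y\in D$; the height of a frame is the maximal size of a chain in its skeleton; the depth of $x$ is the height of the restriction of the frame to $R^*(x)$. For $0<h<\omega$, a frame is $h$-heavy if for every point $x$ of depth $>h$ there is $y$ with $xR^*y$ and depth of $y$ exactly $h$. *)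

(* Defs.v *)
From mathcomp Require Import all_boot.
From Stdlib Require Import Relations.
From Stdlib Require List.
Set Implicit Arguments. Unset Strict Implicit. Unset Printing Implicit Defensive.

Inductive form (n : nat) : Type :=
| Var : nat -> form n
| Bot : form n
| Imp : form n -> form n -> form n
| Box : 'I_n -> form n -> form n.
Arguments Bot {n}.

Definition Neg n (a : form n) : form n := Imp a Bot.
Definition Top n : form n := Neg (@Bot n).
Definition Or n (a b : form n) : form n := Imp (Neg a) b.
Definition And n (a b : form n) : form n := Neg (Imp a (Neg b)).
Definition Dia n (i : 'I_n) (a : form n) : form n := Neg (Box i (Neg a)).

Fixpoint bigOr n (l : seq (form n)) : form n :=
  match l with [::] => Bot | a :: l => Or a (bigOr l) end.
Fixpoint bigAnd n (l : seq (form n)) : form n :=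
  match l with [::] => Top n | a :: l => And a (bigAnd l) end.

Fixpoint DiaPow n (i : nat) (a : form n) : form n :=
  match i with
  | 0 => a
  | i.+1 => DiaPow i (bigOr [seq Dia j a | j <- enum 'I_n])
  end.
Definition DiaLe n (m : nat) (a : form n) : form n :=
  bigOr [seq DiaPow i a | i <- iota 0 m.+1].

Fixpoint subst n (s : nat -> form n) (a : form n) : form n :=
  match a with
  | Var j => s j
  | Bot => Bot
  | Imp a b => Imp (subst s a) (subst s b)
  | Box i a => Box i (subst s a)
  end.

(** classical tautologies: valid under every boolean valuation treating
    variables and boxed formulas as atoms *)
Fixpoint peval n (v : form n -> bool) (a : form n) : bool :=
  match a with
  | Var _ => v a
  | Bot => false
  | Imp a b => implb (peval v a) (peval v b)
  | Box _ _ => v a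
  end.
Definition tautology n (a : form n) : Prop := forall v, peval v a = true.

Definition normal_logic n (L : form n -> Prop) : Prop :=
  [/\ (forall a, tautology a -> L a),
      (forall i a b, L (Imp (Box i (Imp a b)) (Imp (Box i a) (Box i b)))),
      (forall a b, L (Imp a b) -> L a -> L b),
      (forall i a, L a -> L (Box i a)) &
      (forall s a, L a -> L (subst s a))].

Definition consistent_logic n (L : form n -> Prop) : Prop := ~ L Bot.

Definition pretransitive n (L : form n -> Prop) : Prop :=
  exists m : nat, L (Imp (DiaPow m.+1 (@Var n 0)) (DiaLe m (@Var n 0))).

(** k-formulas, k <= omega encoded as option nat (None = omega) *)
Fixpoint vars_below n (k : nat) (a : form n) : bool :=
  match a with
  | Var j => j < k
  | Bot => true
  | Imp a b => vars_below k a && vars_below k b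
  | Box _ a => vars_below k a
  end.
Definition kformula n (k : option nat) (a : form n) : Prop :=
  match k with Some k => vars_below k a | None => True end.

Definition Lconsistent n (L : form n -> Prop) (G : form n -> Prop) : Prop :=
  forall l : seq (form n), (forall a, List.In a l -> G a) -> ~ L (Neg (bigAnd l)).

Definition maximal_consistent n (L : form n -> Prop) (k : option nat)
    (G : form n -> Prop) : Prop :=
  [/\ (forall a, G a -> kformula k a),
      Lconsistent L G &
      (forall D : form n -> Prop, (forall a, D a -> kformula k a) ->
          Lconsistent L D -> (forall a, G a -> D a) -> forall a, D a -> G a)].

Record cpoint n (L : form n -> Prop) (k : option nat) := CPoint {
  cset : form n -> Prop;
  cset_mc : maximal_consistent L k cset }.

Definition canR n (L : form n -> Prop) (k : option nat) (i : 'I_n)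
    (x y : cpoint L k) : Prop :=
  forall a, kformula k a -> cset y a -> cset x (Dia i a).

Definition canRU n (L : form n -> Prop) (k : option nat) (x y : cpoint L k) : Prop :=
  exists i : 'I_n, canR i x y.

(** depth in a frame (W, R): R* is the reflexive transitive closure.
    [depth_ge R x m] : the skeleton of the subframe R*(x) has a chain of
    m clusters, given by representatives f 0 < f 1 < ... < f (m-1)
    (strictly increasing in the cluster order). *)
Definition depth_ge (W : Type) (R : W -> W -> Prop) (x : W) (m : nat) : Prop :=
  exists f : nat -> W,
    (forall i, i < m -> clos_refl_trans W R x (f i)) /\
    (forall i, i.+1 < m ->
        clos_refl_trans W R (f i) (f i.+1) /\ ~ clos_refl_trans W R (f i.+1) (f i)).

Definition depth_gt (W : Type) (R : W -> W -> Prop) (x : W) (h : nat) : Prop :=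
  depth_ge R x h.+1.
Definition depth_eq (W : Type) (R : W -> W -> Prop) (x : W) (h : nat) : Prop :=
  depth_ge R x h /\ ~ depth_ge R x h.+1.

Definition heavy (W : Type) (R : W -> W -> Prop) (h : nat) : Prop :=
  forall x, depth_gt R x h -> exists y, clos_refl_trans W R x y /\ depth_eq R y h.

(* Main.v *)
Require Import Defs.
From mathcomp Require Import all_boot.
From Stdlib Require Import Relations.
From Stdlib Require Import Classical ClassicalEpsilon FunctionalExtensionality PropExtensionality ProofIrrelevance.
From Stdlib Require List.
From mathcomp Require classical_sets boolp.
From mathcomp Require Import zify.

Set Implicit Arguments. Unset Strict Implicit. Unset Printing Implicit Defensive.

Section S.
Variables (n : nat) (L : form n -> Prop) (k : option nat).
Hypothesis HL : normal_logic L.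
Implicit Types (a b c d e q : form n) (l : seq (form n)).

Local Notation kf := (kformula k).
Local Notation pt := (cpoint L k).

Lemma Ltaut a : tautology a -> L a. Proof. by case: HL => H _ _ _ _; apply: H. Qed.
Lemma LK i a b : L (Imp (Box i (Imp a b)) (Imp (Box i a) (Box i b))). Proof. by case: HL => _ H _ _ _; apply: H. Qed.
Lemma LMP a b : L (Imp a b) -> L a -> L b. Proof. by case: HL => _ _ H _ _; apply: H. Qed.
Lemma LNec i a : L a -> L (Box i a). Proof. by case: HL => _ _ _ H _; apply: H. Qed.
Lemma Lsubst s a : L a -> L (subst s a). Proof. by case: HL => _ _ _ _ H; apply: H. Qed.

Lemma peval_bigAnd v (l : seq (form n)) : peval v (bigAnd l) = true <-> (forall e, List.In e l -> peval v e = true).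
Proof.
elim: l => [|a l IH] /=; first by split => // _ e [].
case Ha: (peval v a); case Hl: (peval v (bigAnd l)) => /=; split => //.
- move=> _ e [<-|]; first by []. by move: Hl; rewrite IH => H; apply: H.
- move=> H; have : peval v (bigAnd l) = true by apply/IH => e He; apply: H; right.
  by rewrite Hl.
- by move=> H; rewrite -Ha; apply: H; left.
- by move=> H; rewrite -Ha; apply: H; left.
Qed.

Lemma peval_bigOr v (l : seq (form n)) : peval v (bigOr l) = true <-> (exists e, List.In e l /\ peval v e = true).
Proof.
elim: l => [|a l IH] /=; first by split => // [[e [[]]]].
case Ha: (peval v a); case Hl: (peval v (bigOr l)) => /=; split => //.
- by move=> _; exists a; split => //; left.
- by move=> _; exists a; split => //; left.
- by move=> _; move: Hl; rewrite IH => -[e [He1 He2]]; exists e; split => //; right.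
- move=> [e [[<-|He] He2]]; first by rewrite Ha in He2.
  have : peval v (bigOr l) = true by apply/IH; exists e.
  by rewrite Hl.
Qed.

Lemma kf_Imp a b : kf (Imp a b) <-> kf a /\ kf b.
Proof. case: k => //= j; by split => [/andP|[-> ->]]. Qed.
Lemma kf_Box i a : kf (Box i a) <-> kf a.
Proof. by case: k. Qed.
Lemma kf_Bot : kf (@Bot n). Proof. by case: k. Qed.
Lemma kf_Neg a : kf (Neg a) <-> kf a.
Proof. rewrite /Neg kf_Imp; split => [[]|] //; split => //; exact: kf_Bot. Qed.
Lemma kf_Top : kf (Top n). Proof. apply/kf_Neg; exact: kf_Bot. Qed.
Lemma kf_And a b : kf a -> kf b -> kf (And a b).
Proof. move=> Ha Hb; rewrite /And kf_Neg kf_Imp kf_Neg; by split. Qed.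
Lemma kf_Or a b : kf a -> kf b -> kf (Or a b).
Proof. move=> Ha Hb; rewrite /Or kf_Imp kf_Neg; by split. Qed.
Lemma kf_Dia i a : kf a -> kf (Dia i a).
Proof. by move=> Ha; rewrite /Dia kf_Neg kf_Box kf_Neg. Qed.
Lemma kf_bigOr (l : seq (form n)) : (forall e, List.In e l -> kf e) -> kf (bigOr l).
Proof.
elim: l => [|a l IH] H /=; first exact: kf_Bot.
apply: kf_Or; first by apply: H; left.
by apply: IH => e He; apply: H; right.
Qed.
Lemma kf_bigAnd (l : seq (form n)) : (forall e, List.In e l -> kf e) -> kf (bigAnd l).
Proof.
elim: l => [|a l IH] H /=; first exact: kf_Top.
apply: kf_And; first by apply: H; left.
by apply: IH => e He; apply: H; right.
Qed.

Lemma in_map_iff T (f : T -> form n) (s : seq T) e :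
  List.In e (map f s) <-> exists t, List.In t s /\ e = f t.
Proof.
elim: s => [|t s IH] /=; first by split => // [[t []]].
split.
- move=> [<-|/IH [u [Hu ->]]]; first by exists t; split => //; left.
  by exists u; split => //; right.
- move=> [u [[<-|Hu] He]]; first by left.
  by right; apply IH; exists u.
Qed.

Definition diaU (a : form n) := bigOr [seq Dia j a | j <- enum 'I_n].

Lemma kf_b a : kf a -> kf (diaU a).
Proof. move=> Ha; apply: kf_bigOr => e /in_map_iff [j [_ ->]]; exact: kf_Dia. Qed.

Lemma kf_DiaPow j a : kf a -> kf (DiaPow j a).
Proof. elim: j a => [|j IH] a Ha //=; apply: IH; exact: kf_b. Qed.

Lemma kf_DiaLe m a : kf a -> kf (DiaLe m a).
Proof. move=> Ha; apply: kf_bigOr => e /in_map_iff [j [_ ->]]; exact: kf_DiaPow. Qed.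

Definition nq q e : bool := if excluded_middle_informative (e = q) then false else true.

Lemma in_filter_nq q l e : List.In e (List.filter (nq q) l) <-> List.In e l /\ e <> q.
Proof.
rewrite List.filter_In /nq; case: excluded_middle_informative => H; split.
- by case.
- by case.
- by case.
- by case.
Qed.

Lemma mcs_kf (y : pt) a : cset y a -> kf a.
Proof. by case: (cset_mc y) => H _ _; apply: H. Qed.

Lemma mcs_cons (y : pt) l : (forall e, List.In e l -> cset y e) -> ~ L (Neg (bigAnd l)).
Proof. by case: (cset_mc y) => _ H _; apply: H. Qed.

Lemma taut_intro a : (forall v, peval v a = true) -> L a.
Proof. by move=> H; apply: Ltaut. Qed.

Lemma mcs_dedL (y : pt) l q : (forall e, List.In e l -> cset y e) -> kf q ->
  L (Imp (bigAnd l) q) -> cset y q.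
Proof.
move=> Hl Hq HLq.
case: (cset_mc y) => Hk Hc Hm.
apply: (Hm (fun a => cset y a \/ a = q)) ; last by right.
- by move=> a [/Hk|->].
- move=> l' Hl' HL'.
  apply: (Hc (l ++ List.filter (nq q) l')).
  + move=> e He; case: (List.in_app_or _ _ _ He) => [/Hl //|/in_filter_nq [He1 He2]].
    by case: (Hl' e He1).
  + apply: LMP HL'. apply: LMP HLq. apply: taut_intro => v /=.
    have H: peval v (bigAnd (l ++ List.filter (nq q) l')) = true ->
            peval v q = true -> peval v (bigAnd l') = true.
      move/peval_bigAnd => H Hvq; apply/peval_bigAnd => e He.
      case: (excluded_middle_informative (e = q)) => [->|Hne] //.
      apply: H; apply List.in_or_app; right; exact/in_filter_nq.
    have H2: peval v (bigAnd (l ++ List.filter (nq q) l')) = true ->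
            peval v (bigAnd l) = true.
      move/peval_bigAnd => H2; apply/peval_bigAnd => e He.
      apply: H2; apply List.in_or_app; by left.
    move: H H2.
    case: (peval v (bigAnd (l ++ List.filter (nq q) l'))); 
    case: (peval v q); case: (peval v (bigAnd l')); case: (peval v (bigAnd l)) => //=;
    move=> H1 H2; (try have := H2 erefl); (try have := H1 erefl erefl) => //.
- by move=> a Ha; left.
Qed.

Lemma mcs_ded (y : pt) l q : (forall e, List.In e l -> cset y e) -> kf q ->
  (forall v, (forall e, List.In e l -> peval v e = true) -> peval v q = true) -> cset y q.
Proof.
move=> Hl Hq Hv; apply: (mcs_dedL Hl Hq); apply: taut_intro => v /=.
case E: (peval v (bigAnd l)) => //=.
by apply: Hv; apply/peval_bigAnd.
Qed.

Lemma mcs_thm (y : pt) q : L q -> kf q -> cset y q.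
Proof.
move=> Hq Hk; apply: (@mcs_dedL y [::]) => //.
apply: LMP Hq; apply: taut_intro => v /=; by case: (peval v q).
Qed.

Lemma mcs_mp (y : pt) a c : cset y (Imp a c) -> cset y a -> kf c -> cset y c.
Proof.
move=> H1 H2 Hk; apply: (@mcs_ded y [:: Imp a c; a]) => //.
- by move=> e /= [<-|[<-|[]]].
- move=> v Hv; have := Hv (Imp a c) (or_introl erefl); have := Hv a (or_intror (or_introl erefl)) => /=.
  by move=> ->.
Qed.

Lemma mcs_bot (y : pt) : ~ cset y Bot.
Proof.
move=> H; apply: (@mcs_cons y [:: Bot]); first by move=> e /= [<-|[]].
by apply: taut_intro.
Qed.

Lemma mcs_negE (y : pt) a : cset y (Neg a) -> ~ cset y a.
Proof. move=> H1 H2; apply: (mcs_bot (mcs_mp H1 H2 (@kf_Bot))). Qed.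

Lemma mcs_neg (y : pt) a : kf a -> ~ cset y a -> cset y (Neg a).
Proof.
move=> Hk Hna.
case: (cset_mc y) => Hky Hc Hm.
have Hnc : ~ Lconsistent L (fun e => cset y e \/ e = a).
  move=> Hcons; apply: Hna; apply: (Hm _ _ Hcons); last by right.
  - by move=> e [/Hky|->].
  - by move=> e He; left.
have [l [Hl HLl]] : exists l, (forall e, List.In e l -> cset y e \/ e = a) /\ L (Neg (bigAnd l)).
  apply: NNPP => Hne; apply: Hnc => l Hl HLl; apply: Hne; by exists l.
apply: (@mcs_dedL y (List.filter (nq a) l)).
- by move=> e /in_filter_nq [He1 He2]; case: (Hl e He1).
- exact/kf_Neg.
- apply: LMP HLl; apply: taut_intro => v /=.
  have H: peval v (bigAnd (List.filter (nq a) l)) = true ->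
            peval v a = true -> peval v (bigAnd l) = true.
    move/peval_bigAnd => H Hvq; apply/peval_bigAnd => e He.
    case: (excluded_middle_informative (e = a)) => [->|Hne] //.
    by apply: H; exact/in_filter_nq.
  move: H.
  case: (peval v (bigAnd (List.filter (nq a) l))); case: (peval v a);
  case: (peval v (bigAnd l)) => //=; move=> H1; have := H1 erefl erefl => //.
Qed.

Lemma mcs_compl (y : pt) a : kf a -> cset y a \/ cset y (Neg a).
Proof.
move=> Hk; case: (classic (cset y a)) => H; [by left | right; exact: mcs_neg].
Qed.

Lemma mcs_nnE (y : pt) a : kf a -> ~ cset y (Neg a) -> cset y a.
Proof. by move=> Hk H; case: (mcs_compl y Hk). Qed.

Lemma mcs_bigOr_in (y : pt) l e : List.In e l -> cset y e ->
  (forall e, List.In e l -> kf e) -> cset y (bigOr l).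
Proof.
move=> Hel He Hk; apply: (@mcs_ded y [:: e]); first by move=> e' /= [<-|[]].
- exact: kf_bigOr.
- move=> v Hv; apply/peval_bigOr; exists e; split => //; apply: Hv; by left.
Qed.

Lemma mcs_bigOr_prime (y : pt) l : cset y (bigOr l) -> exists e, List.In e l /\ cset y e.
Proof.
elim: l => [|a l IH] /= H; first by case: (mcs_bot H).
have Hk := mcs_kf H. move: Hk; rewrite /Or kf_Imp kf_Neg => -[Hka Hkl].
case: (classic (cset y a)) => Ha; first by exists a; split => //; left.
have /IH [e [He1 He2]] := mcs_mp H (mcs_neg Hka Ha) Hkl.
by exists e; split => //; right.
Qed.

Lemma mcs_bigAnd (y : pt) l : (forall e, List.In e l -> cset y e) -> cset y (bigAnd l).
Proof.
move=> Hl; apply: (mcs_ded Hl).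
- by apply: kf_bigAnd => e /Hl /mcs_kf.
- by move=> v /peval_bigAnd.
Qed.

Lemma mcs_And (y : pt) a c : cset y (And a c) <-> cset y a /\ cset y c.
Proof.
split.
- move=> H; have := mcs_kf H; rewrite /And kf_Neg kf_Imp kf_Neg => -[Ha Hc]; split.
  + apply: (@mcs_ded y [:: And a c]) => //; first by move=> e /= [<-|[]].
    move=> v /(_ (And a c) (or_introl erefl)) /=.
    by case: (peval v a); case: (peval v c).
  + apply: (@mcs_ded y [:: And a c]) => //; first by move=> e /= [<-|[]].
    move=> v /(_ (And a c) (or_introl erefl)) /=.
    by case: (peval v a); case: (peval v c).
- move=> [Ha Hc]; apply: (@mcs_ded y [:: a; c]).
  + by move=> e /= [<-|[<-|[]]].
  + by apply: kf_And; apply: mcs_kf; eauto.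
  + move=> v Hv; have := Hv a (or_introl erefl); have := Hv c (or_intror (or_introl erefl)) => /=.
    by move=> -> ->.
Qed.

Lemma mcs_nn (y : pt) a : cset y (Neg (Neg a)) -> cset y a.
Proof.
move=> H; have Hk : kf a by move: (mcs_kf H); rewrite !kf_Neg.
apply: (@mcs_ded y [:: Neg (Neg a)]) => //; first by move=> e /= [<-|[]].
move=> v /(_ _ (or_introl erefl)) /=; by case: (peval v a).
Qed.

Lemma BoxMono (y : pt) i a c : L (Imp a c) -> kf c -> cset y (Box i a) -> cset y (Box i c).
Proof.
move=> HL1 Hk H; apply: (mcs_mp _ H); last exact/kf_Box.
apply: mcs_thm; first exact: (LMP (LK i a c) (LNec i HL1)).
apply/kf_Imp; split; [exact: mcs_kf H| exact/kf_Box].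
Qed.

Lemma BoxMP2 (y : pt) i a c d : L (Imp a (Imp c d)) -> kf d ->
  cset y (Box i a) -> cset y (Box i c) -> cset y (Box i d).
Proof.
move=> HL1 Hk Ha Hc.
have Hkc : kf c by move: (mcs_kf Hc); rewrite kf_Box.
have H1 : cset y (Box i (Imp c d)) by apply: (BoxMono HL1) => //; apply/kf_Imp.
apply: (mcs_mp _ Hc); last exact/kf_Box.
apply: (mcs_mp _ H1); last by apply/kf_Imp; split; apply/kf_Box.
apply: mcs_thm; first exact: LK.
apply/kf_Imp; split; first by apply/kf_Box/kf_Imp.
by apply/kf_Imp; split; apply/kf_Box.
Qed.

Lemma DiaMono (y : pt) i a c : L (Imp a c) -> kf c -> cset y (Dia i a) -> cset y (Dia i c).
Proof.
move=> HL1 Hk H; apply: NNPP => Hn.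
have Hn2 := mcs_neg (kf_Dia i Hk) Hn.
have H3 : cset y (Box i (Neg c)) by apply: mcs_nn.
have Hka : kf a by move: (mcs_kf H); rewrite /Dia !kf_Neg kf_Box kf_Neg.
have H4 : cset y (Box i (Neg a)).
  apply: (BoxMono _ _ H3); last exact/kf_Neg.
  apply: LMP HL1; apply: taut_intro => v /=; by case: (peval v a); case: (peval v c).
exact: (mcs_negE H H4).
Qed.

Lemma chain_list (X T : Type) (B0 : X -> Prop) (G : T -> X -> Prop) (A : T -> Prop)
  (r : T -> T -> Prop) :
  (forall s t, A s -> A t -> r s t \/ r t s) -> (forall s t, r s t -> forall x, G s x -> G t x) ->
  (forall t, A t -> forall x, B0 x -> G t x) ->
  forall l : list X, (forall x, List.In x l -> B0 x \/ exists t, A t /\ G t x) ->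
  (forall x, List.In x l -> B0 x) \/ exists t, A t /\ forall x, List.In x l -> G t x.
Proof.
move=> Htot Hmon HB0; elim=> [|x l IH] Hl; first by left.
have [IHl|[t [At Ht]]] := IH (fun w Hw => Hl w (or_intror Hw)).
- case: (Hl x (or_introl erefl)) => [Bx|[t' [At' Gt']]].
  + by left => w /= [<-|/IHl].
  + right; exists t'; split => // w /= [<-//|/IHl]; exact: HB0.
- case: (Hl x (or_introl erefl)) => [Bx|[t' [At' Gt']]].
  + by right; exists t; split => // w /= [<-|/Ht //]; exact: HB0.
  + case: (Htot _ _ At At') => Hr.
    * right; exists t'; split => // w /= [<-//|/Ht]; exact: Hmon.
    * right; exists t; split => // w /= [<-|/Ht //]; exact: (Hmon _ _ Hr).
Qed.

Lemma lindenbaum (D : form n -> Prop) : (forall a, D a -> kf a) -> Lconsistent L D ->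
  exists y : pt, forall a, D a -> cset y a.
Proof.
move=> HDk HDc.
pose P (S : form n -> Prop) := [/\ (forall a, S a -> kf a), Lconsistent L S & (forall a, D a -> S a)].
pose T := {S | P S}.
pose R (s t : T) := boolp.asbool (forall a, sval s a -> sval t a).
have PD : P D by split.
have H1 : forall t, R t t by move=> s; apply/boolp.asboolP.
have H2 : forall r s t, R r s -> R s t -> R r t.
  move=> r s t /boolp.asboolP G1 /boolp.asboolP G2; apply/boolp.asboolP => a /G1; exact: G2.
have H3 : forall A, classical_sets.total_on A R -> exists t, forall s, A s -> R s t.
  move=> A Htot.
pose U := fun a => D a \/ exists s, A s /\ sval s a.
have PU : P U.
  split.
  + move=> a [/HDk //|[s [_ Hs]]]; by case: (svalP s) => H _ _; apply: H.
  + move=> l Hl HLl.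
    have Hmon : forall s t, R s t -> forall a, sval s a -> sval t a by move=> s t /boolp.asboolP.
    have HB0 : forall s, A s -> forall a, D a -> sval s a by move=> s _ a Da; case: (svalP s) => _ _; apply.
    case: (@chain_list (form n) T D (fun s a => sval s a) A (fun s t => R s t) Htot Hmon HB0 l Hl) => [HlD|[s [_ Hs]]].
    * by apply: (HDc l HlD).
    * by case: (svalP s) => _ Hc _; apply: (Hc l Hs).
  + by move=> a Ha; left.
exists (exist _ U PU) => s As; apply/boolp.asboolP => a Ha; right; by exists s.
have [t Ht] := @classical_sets.ZL_preorder T (exist _ D PD) R H1 H2 H3.
case: (svalP t) => Htk Htc HtD.
  have Hmc : maximal_consistent L k (sval t).
    split => // D' HD'k HD'c Hsub.
    have PD' : P D' by split => // a /HtD; apply: Hsub.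
    have /Ht /boolp.asboolP H : R t (exist _ D' PD') by apply/boolp.asboolP.
    exact: H.
  by exists (CPoint Hmc).
Qed.

Lemma existence (y : pt) i a : kf a -> cset y (Dia i a) -> exists z : pt, canR i y z /\ cset z a.
Proof.
move=> Hka Hy.
pose D := fun e => kf e /\ (e = a \/ cset y (Box i e)).
have [z Hz] : exists z : pt, forall e, D e -> cset z e.
  apply: lindenbaum; first by move=> e [].
  move=> l Hl HLl.
  have Hbox : forall ds, (forall e, List.In e ds -> cset y (Box i e)) -> cset y (Box i (bigAnd ds)).
    elim=> [|e ds IH] Hds /=.
    + apply: mcs_thm; last by apply/kf_Box; exact: kf_Top.
      by apply: LNec; apply: taut_intro.
    + have He := Hds e (or_introl erefl).
      have Hkd : kf (bigAnd ds) by apply: kf_bigAnd => e' /(fun h => or_intror h) /Hds /mcs_kf /kf_Box.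
      apply: (BoxMP2 _ _ He (IH (fun e' h => Hds e' (or_intror h)))).
      * apply: taut_intro => v /=; by case: (peval v e); case: (peval v (bigAnd ds)).
      * apply: kf_And => //; by move: (mcs_kf He); rewrite kf_Box.
  have H1 := Hbox (List.filter (nq a) l)
     (fun e He => match Hl e (proj1 (proj1 (in_filter_nq _ _ _) He)) with
                  | conj _ (or_introl h) => False_ind _ (proj2 (proj1 (in_filter_nq _ _ _) He) h)
                  | conj _ (or_intror h) => h end).
  have H2 : cset y (Box i (Neg a)).
    apply: (BoxMono _ _ H1); last exact/kf_Neg.
    apply: LMP HLl; apply: taut_intro => v /=.
    have H: peval v (bigAnd (List.filter (nq a) l)) = true ->
            peval v a = true -> peval v (bigAnd l) = true.
      move/peval_bigAnd => H Hvq; apply/peval_bigAnd => e He.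
      case: (excluded_middle_informative (e = a)) => [->|Hne] //.
      by apply: H; exact/in_filter_nq.
    move: H.
    case: (peval v (bigAnd (List.filter (nq a) l))); case: (peval v a);
    case: (peval v (bigAnd l)) => //=; move=> H; have := H erefl erefl => //.
  exact: (mcs_negE Hy H2).
exists z; split; last by apply: Hz; split => //; left.
move=> c Hkc Hc; apply: NNPP => Hn.
have Hn2 := mcs_neg (kf_Dia i Hkc) Hn.
have H3 : cset y (Box i (Neg c)) by apply: mcs_nn.
have : cset z (Neg c) by apply: Hz; split; [exact/kf_Neg | right].
by move/mcs_negE.
Qed.

Lemma In_mem (T : eqType) (x : T) (s : seq T) : List.In x s <-> x \in s.
Proof.
elim: s => [|y s IH]; first by [].
rewrite in_cons; split.
- by move=> [->|/IH ->]; rewrite ?eqxx ?orbT.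
- by move=> /orP [/eqP ->|/IH]; [left|right].
Qed.

Lemma In_enum (i : 'I_n) : List.In i (enum 'I_n).
Proof. by apply/In_mem; rewrite mem_enum. Qed.

Fixpoint path (x : pt) (j : nat) (z : pt) : Prop :=
  match j with 0 => x = z | j.+1 => exists w, path x j w /\ canRU w z end.

Lemma F1 j : forall (x z : pt) a, path x j z -> kf a -> cset z a -> cset x (DiaPow j a).
Proof.
elim: j => [|j IH] x z a /=; first by move=> -> _.
move=> [w [Hp [i Hi]]] Hk Hz.
apply: (IH x w (diaU a) Hp (kf_b Hk)).
apply: (@mcs_bigOr_in w _ (Dia i a)).
- by apply/in_map_iff; exists i; split => //; exact: In_enum.
- exact: Hi.
- by move=> e /in_map_iff [i' [_ ->]]; exact: kf_Dia.
Qed.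

Lemma F2 j : forall (x : pt) a, kf a -> cset x (DiaPow j a) -> exists z, path x j z /\ cset z a.
Proof.
elim: j => [|j IH] x a Hk H /=; first by exists x.
have [w [Hp Hw]] := IH x (diaU a) (kf_b Hk) H.
have [e [He1 He2]] := mcs_bigOr_prime Hw.
move: He1 => /in_map_iff [i [_ Hei]]; rewrite Hei in He2.
have [z [Hz1 Hz2]] := existence Hk He2.
exists z; split => //; exists w; split => //; by exists i.
Qed.

Lemma path_rt j : forall (x z : pt), path x j z -> clos_refl_trans pt (@canRU n L k) x z.
Proof.
elim: j => [|j IH] x z /=; first by move=> ->; apply: rt_refl.
move=> [w [Hp Hw]]; apply: rt_trans (IH _ _ Hp) (rt_step _ _ _ _ Hw).
Qed.

Lemma rt_path (x z : pt) : clos_refl_trans pt (@canRU n L k) x z -> exists j, path x j z.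
Proof.
move=> H; have := clos_rt_rtn1 _ _ _ _ H; elim => [|w z' Hw _ [j Hj]]; first by exists 0.
by exists j.+1; exists w.
Qed.

Lemma pt_eq (x y : pt) : (forall a, cset x a <-> cset y a) -> x = y.
Proof.
case: x => cx Hx; case: y => cy Hy /= H.
have E : cx = cy by apply: functional_extensionality => a; apply: propositional_extensionality.
subst; f_equal; apply: proof_irrelevance.
Qed.

Lemma subst_diaU s a : subst s (diaU a) = diaU (subst s a).
Proof. rewrite /diaU; elim: (enum 'I_n) => //= i l IH; by rewrite IH. Qed.

Lemma subst_DiaPow s j : forall a, subst s (DiaPow j a) = DiaPow j (subst s a).
Proof. elim: j => [|j IH] a //=; rewrite IH; congr DiaPow; exact: subst_diaU. Qed.

Lemma subst_DiaLe s m a : subst s (DiaLe m a) = DiaLe m (subst s a).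
Proof. rewrite /DiaLe; elim: (iota 0 m.+1) => //= i l IH; by rewrite IH subst_DiaPow. Qed.

Lemma DiaPow_add i j : forall a, DiaPow (i + j) a = DiaPow i (DiaPow j a).
Proof. elim: j => [|j IH] a; first by rewrite addn0. by rewrite addnS /= IH. Qed.

Lemma diaU_mono (v : pt) c c' : L (Imp c c') -> kf c' -> cset v (diaU c) -> cset v (diaU c').
Proof.
move=> HL1 Hk H.
have [e [/in_map_iff [i [_ ->]] He2]] := mcs_bigOr_prime H.
apply: (@mcs_bigOr_in v _ (Dia i c')).
- by apply/in_map_iff; exists i; split => //; exact: In_enum.
- exact: DiaMono He2.
- by move=> e0 /in_map_iff [i' [_ ->]]; exact: kf_Dia.
Qed.

Lemma FD (T : Type) (s : seq T) (op : T -> form n -> form n) (y z : pt) :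
  (forall t c, kf c -> kf (op t c)) ->
  (forall t c c', kf c -> kf c' -> (forall v : pt, cset v c -> cset v c') ->
       cset y (op t c) -> cset y (op t c')) ->
  (forall c, kf c -> cset z c -> cset y (bigOr [seq op t c | t <- s])) ->
  exists t, List.In t s /\ forall c, kf c -> cset z c -> cset y (op t c).
Proof.
move=> Hkop Hmono H.
have key : (exists t, List.In t s /\ forall c, kf c -> cset z c -> cset y (op t c)) \/
   exists c, kf c /\ cset z c /\ forall t, List.In t s -> ~ cset y (op t c).
  elim: s {H} => [|t s IH].
  - right; exists (Top n); split; first exact: kf_Top.
    split; last by move=> t [].
    by apply: mcs_thm; [apply: taut_intro | exact: kf_Top].
  - case: IH => [[t' [Ht' G]] | [c [Hkc [Hzc Hno]]]].
    + by left; exists t'; split => //; right.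
    + case: (classic (forall c, kf c -> cset z c -> cset y (op t c))) => Gt.
      * by left; exists t; split => //; left.
      * have [c1 Hc1] : exists c1, ~ (kf c1 -> cset z c1 -> cset y (op t c1)).
          by apply: NNPP => Hn; apply: Gt => c1; apply: NNPP => Hn2; apply: Hn; exists c1.
        have Hkc1 : kf c1 by apply: NNPP => Hn; apply: Hc1 => /Hn.
        have Hzc1 : cset z c1 by apply: NNPP => Hn; apply: Hc1 => _ /Hn.
        have Hyc1 : ~ cset y (op t c1) by move=> Hn; apply: Hc1.
        right; exists (And c c1); split; first exact: kf_And.
        split; first by apply/mcs_And.
        move=> t'' /= [<-|Ht''] Hy.
        -- apply: Hyc1; apply: (Hmono _ _ _ _ _ _ Hy) => //; first exact: kf_And.
           by move=> v /mcs_And [].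
        -- apply: (Hno t'' Ht''); apply: (Hmono _ _ _ _ _ _ Hy) => //; first exact: kf_And.
           by move=> v /mcs_And [].
case: key => // -[c [Hk [Hz Hno]]].
have [e [/in_map_iff [t [Ht ->]] He]] := mcs_bigOr_prime (H c Hk Hz).
by case: (Hno t Ht).
Qed.

Lemma canon_path j : forall (y z : pt), (forall c, kf c -> cset z c -> cset y (DiaPow j c)) -> path y j z.
Proof.
elim: j => [|j IH] y z H /=.
- apply: pt_eq => a; split; last by move=> Ha; exact: H _ (mcs_kf Ha) Ha.
  case: (cset_mc z) => _ _ Hm; apply: Hm.
  + exact: mcs_kf.
  + by case: (cset_mc y).
  + by move=> a' Ha'; apply: H => //; exact: mcs_kf Ha'.
- pose D := fun e => kf e /\ ((exists c, kf c /\ cset z c /\ e = diaU c) \/ ~ cset y (DiaPow j (Neg e))).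
  have claim : forall l, (forall e, List.In e l -> D e) -> exists c d, kf c /\ kf d /\ cset z c /\
      ~ cset y (DiaPow j (Neg d)) /\
      forall v : pt, cset v (diaU c) -> cset v d -> forall e, List.In e l -> cset v e.
    elim=> [|e l IHl] Hl.
    + exists (Top n), (Top n); split; first exact: kf_Top.
      split; first exact: kf_Top.
      split; first by apply: mcs_thm; [apply: taut_intro | exact: kf_Top].
      split; last by move=> v _ _ e [].
      move=> Hy; have [v [_ Hv]] := F2 (proj2 (kf_Neg _) kf_Top) Hy.
      by apply: (mcs_negE Hv); apply: mcs_thm; [apply: taut_intro | exact: kf_Top].
    + have [c [d [Hkc [Hkd [Hzc [Hyd Hv]]]]]] := IHl (fun e' h => Hl e' (or_intror h)).
      case: (Hl e (or_introl erefl)) => Hke [[c' [Hkc' [Hzc' Hee]]] | Hne].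
      * exists (And c c'), d; split; first exact: kf_And.
        split => //; split; first by apply/mcs_And.
        split => // v Hv1 Hv2 e' /= [<-|He'].
        -- rewrite Hee; apply: (diaU_mono _ Hkc' Hv1).
           apply: taut_intro => w /=; by case: (peval w c); case: (peval w c').
        -- apply: (Hv v _ Hv2 e' He'); apply: (diaU_mono _ Hkc Hv1).
           apply: taut_intro => w /=; by case: (peval w c); case: (peval w c').
      * exists c, (And d e); split => //; split; first exact: kf_And.
        split => //; split.
        -- move=> Hy; have [v [Hp Hv']] := F2 (proj2 (kf_Neg _) (kf_And Hkd Hke)) Hy.
           have Hdv : cset v d.
             apply: mcs_nnE => // Hn; apply: Hyd; exact: F1 Hp (proj2 (kf_Neg _) Hkd) Hn.
           have Hev : cset v e.
             apply: mcs_nnE => // Hn; apply: Hne; exact: F1 Hp (proj2 (kf_Neg _) Hke) Hn.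
           by apply: (mcs_negE Hv'); apply/mcs_And.
        -- move=> v Hv1 /mcs_And [Hv2 Hv3] e' /= [<-//|He'].
           exact: Hv v Hv1 Hv2 e' He'.
  have [w Hw] : exists w : pt, forall e, D e -> cset w e.
    apply: lindenbaum; first by move=> e [].
    move=> l Hl HLl.
    have [c [d [Hkc [Hkd [Hzc [Hyd Hv]]]]]] := claim l Hl.
    have [v [Hp Hv']] := F2 (kf_b Hkc) (H c Hkc Hzc).
    have Hdv : cset v d.
      apply: mcs_nnE => // Hn; apply: Hyd; exact: F1 Hp (proj2 (kf_Neg _) Hkd) Hn.
    exact: (mcs_cons (Hv v Hv' Hdv) HLl).
  exists w; split.
  + apply: IH => d Hkd Hwd; apply: NNPP => Hn.
    have : cset w (Neg d).
      apply: Hw; split; first exact/kf_Neg.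
      right => Hy; have [v [Hp Hv]] := F2 (proj2 (kf_Neg _) (proj2 (kf_Neg _) Hkd)) Hy.
      by apply: Hn; apply: (F1 Hp Hkd); apply: mcs_nn.
    by move/mcs_negE.
  + have Fk : forall (i : 'I_n) c, kf c -> kf (Dia i c) by move=> i c Hc; exact: kf_Dia.
    have Fm : forall (i : 'I_n) c c', kf c -> kf c' -> (forall v : pt, cset v c -> cset v c') ->
       cset w (Dia i c) -> cset w (Dia i c').
      move=> i c c' Hc Hc' Hcc' Hwc.
      have [u [Hu1 Hu2]] := existence Hc Hwc.
      exact: Hu1 _ Hc' (Hcc' _ Hu2).
    have Fh : forall c, kf c -> cset z c -> cset w (bigOr [seq Dia i c | i <- enum 'I_n]).
      by move=> c Hkc Hzc; apply: Hw; split; [exact: kf_b | left; exists c].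
    have [i [_ Hi]] := @FD _ (enum 'I_n) (fun i c => Dia i c) w z Fk Fm Fh.
    by exists i.
Qed.

Variable m : nat.
Hypothesis Hpre : L (Imp (DiaPow m.+1 (@Var n 0)) (DiaLe m (@Var n 0))).

Lemma pre_inst d : L (Imp (DiaPow m.+1 d) (DiaLe m d)).
Proof.
have H := Lsubst (fun _ => d) Hpre.
have E : forall A B, subst (fun _ => d) (Imp A B) = Imp (subst (fun _ => d) A) (subst (fun _ => d) B) by [].
by rewrite E subst_DiaPow subst_DiaLe in H.
Qed.

Lemma In_iota_le i : List.In i (iota 0 m.+1) <-> i <= m.
Proof. by rewrite In_mem mem_iota add0n ltnS. Qed.

Lemma Red N : forall j (y : pt) c, j <= N -> kf c -> cset y (DiaPow j c) -> cset y (DiaLe m c).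
Proof.
elim: N => [|N IH] j y c HjN Hk H.
- apply: (@mcs_bigOr_in y _ (DiaPow j c)) => //.
  + apply/in_map_iff; exists j; split => //; apply/In_iota_le.
    by move: HjN; rewrite leqn0 => /eqP ->.
  + by move=> e /in_map_iff [i [_ ->]]; exact: kf_DiaPow.
- case: (leqP j m) => Hjm.
  + apply: (@mcs_bigOr_in y _ (DiaPow j c)) => //.
    * by apply/in_map_iff; exists j; split => //; apply/In_iota_le.
    * by move=> e /in_map_iff [i [_ ->]]; exact: kf_DiaPow.
  + have Ej : j = m.+1 + (j - m.+1) by rewrite subnKC.
    move: H; rewrite Ej DiaPow_add => H.
    have Hk' : kf (DiaPow (j - m.+1) c) by exact: kf_DiaPow.
    have H2 := mcs_mp (mcs_thm y (pre_inst _) (proj2 (kf_Imp _ _) (conj (mcs_kf H) (kf_DiaLe _ Hk')))) H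
                   (kf_DiaLe _ Hk').
    have [e [/in_map_iff [i [Hi ->]] He]] := mcs_bigOr_prime H2.
    rewrite -DiaPow_add in He.
    apply: (IH (i + (j - m.+1))) He => //.
    move: Hi => /In_iota_le Hi.
    clear -Hi HjN Hjm; lia.
Qed.

Lemma Red' j (y : pt) c : kf c -> cset y (DiaPow j c) -> cset y (DiaLe m c).
Proof. exact: (@Red j j y c (leqnn j)). Qed.

Definition Mset (y : pt) a := kf a /\ ~ cset y (DiaLe m (Neg a)).

Lemma MA (y z : pt) : clos_refl_trans pt (@canRU n L k) y z -> forall a, Mset y a -> cset z a.
Proof.
move=> /rt_path [j Hp] a [Hk Hn]; apply: NNPP => Hz.
apply: Hn; apply: (Red' (j := j)); first exact/kf_Neg.
apply: (F1 Hp); first exact/kf_Neg.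
exact: mcs_neg.
Qed.

Lemma MC (y y' : pt) : clos_refl_trans pt (@canRU n L k) y y' -> forall a, Mset y a -> Mset y' a.
Proof.
move=> Hyy' a Ha; split; first by case: Ha.
move=> H; have [e [/in_map_iff [i [_ ->]] He]] := mcs_bigOr_prime H.
have [v [Hp Hv]] := F2 (proj2 (kf_Neg _) (proj1 Ha)) He.
have := MA (rt_trans _ _ _ _ _ Hyy' (path_rt Hp)) Ha.
by move/(mcs_negE Hv).
Qed.

Lemma MB (y z : pt) : (forall a, Mset y a -> cset z a) -> clos_refl_trans pt (@canRU n L k) y z.
Proof.
move=> HM.
have Hle : forall c, kf c -> cset z c -> cset y (DiaLe m c).
  move=> c Hkc Hzc; apply: NNPP => Hn.
  have : cset z (Neg c).
    apply: HM; split; first exact/kf_Neg.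
    move=> H; have [e [/in_map_iff [i [Hi ->]] He]] := mcs_bigOr_prime H.
    have [v [Hp Hv]] := F2 (proj2 (kf_Neg _) (proj2 (kf_Neg _) Hkc)) He.
    apply: Hn; apply: (@mcs_bigOr_in y _ (DiaPow i c)).
    * by apply/in_map_iff; exists i.
    * exact: (F1 Hp Hkc (mcs_nn Hv)).
    * by move=> e' /in_map_iff [i' [_ ->]]; exact: kf_DiaPow.
  by move/mcs_negE.
have Fk : forall (j : nat) c, kf c -> kf (DiaPow j c) by move=> j c Hc; exact: kf_DiaPow.
have Fm : forall (j : nat) c c', kf c -> kf c' -> (forall v : pt, cset v c -> cset v c') ->
       cset y (DiaPow j c) -> cset y (DiaPow j c').
  move=> j c c' Hc Hc' Hcc' Hyc.
  have [u [Hu1 Hu2]] := F2 Hc Hyc.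
  exact: F1 Hu1 Hc' (Hcc' _ Hu2).
have [j [_ Hj]] := @FD _ (iota 0 m.+1) (fun j c => DiaPow j c) y z Fk Fm Hle.
exact: path_rt (canon_path Hj).
Qed.

Lemma main_premax (x : pt) : exists y : pt, clos_refl_trans pt (@canRU n L k) x y /\
  forall z, clos_refl_trans pt (@canRU n L k) y z -> clos_refl_trans pt (@canRU n L k) z y.
Proof.
pose T := {y : pt | clos_refl_trans pt (@canRU n L k) x y}.
pose R (s t : T) := boolp.asbool (clos_refl_trans pt (@canRU n L k) (sval s) (sval t)).
have H1 : forall t, R t t by move=> s; apply/boolp.asboolP; apply: rt_refl.
have H2 : forall r s t, R r s -> R s t -> R r t.
  move=> r s t /boolp.asboolP G1 /boolp.asboolP G2; apply/boolp.asboolP; exact: rt_trans G1 G2.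
have H3 : forall A, classical_sets.total_on A R -> exists t, forall s, A s -> R s t.
  move=> A Htot.
  pose U := fun a => Mset x a \/ exists s, A s /\ Mset (sval s) a.
  have [z Hz] : exists z : pt, forall a, U a -> cset z a.
    apply: lindenbaum.
    - by move=> a [[]|[s [_ []]]].
    - move=> l Hl HLl.
      have Hmon : forall s t, R s t -> forall a, Mset (sval s) a -> Mset (sval t) a.
        by move=> s t /boolp.asboolP; apply: MC.
      have HB0 : forall s, A s -> forall a, Mset x a -> Mset (sval s) a.
        by move=> s _; apply: MC; exact: svalP.
      case: (@chain_list (form n) T (Mset x) (fun s a => Mset (sval s) a) A (fun s t => R s t)
               Htot Hmon HB0 l Hl) => [HlD|[s [_ Hs]]].
      + by apply: (mcs_cons _ HLl) => e /HlD; apply: MA; apply: rt_refl.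
      + by apply: (mcs_cons _ HLl) => e /Hs; apply: MA; apply: rt_refl.
  have Hxz : clos_refl_trans pt (@canRU n L k) x z by apply: MB => a Ha; apply: Hz; left.
  exists (exist _ z Hxz) => s As; apply/boolp.asboolP; apply: MB => a Ha; apply: Hz; right; by exists s.
have [t Ht] := @classical_sets.ZL_preorder T (exist _ x (rt_refl _ _ x)) R H1 H2 H3.
exists (sval t); split; first exact: svalP.
move=> z Hz.
have Hxz : clos_refl_trans pt (@canRU n L k) x z by apply: rt_trans (svalP t) Hz.
have /Ht /boolp.asboolP : R t (exist _ z Hxz) by apply/boolp.asboolP.
done.
Qed.

End S.

Theorem proposition4p2 (n : nat) (L : form n -> Prop) (k : option nat) :
  normal_logic L -> consistent_logic L -> pretransitive L ->
  heavy (@canRU n L k) 1.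
Proof.
move=> HL _ [m Hm] x _.
have [y [Hxy Hy]] := main_premax HL Hm x.
exists y; split => //; split.
- exists (fun _ => y); split => [i _|i]; first exact: rt_refl.
  by [].
- move=> [f [Hf1 Hf2]].
  have [H01 H10] := Hf2 0 erefl.
  apply: H10; apply: rt_trans (Hy _ (Hf1 1 erefl)) (Hf1 0 erefl).
Qed.
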